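(* In the setting of the context, if $\mathcal{Q}\cap\mathcal{M}\ne\emptyset$, then the market does not admit strong $\rho$-arbitrage.
   Context: Let $(\Omega,\mathcal{F},\mathbb{P})$ be a probability space and a market: riskless asset $S^0_0=1$, $S^0_1=1+r$, $r>-1$; risky assets $S^1,\dots,S^d$ with constants $S^i_0>0$ and real-valued $\mathcal{F}$-measurable $S^i_1$; returns $R^i:=(S^i_1-S^i_0)/S^i_0$. Standing assumptions: nonredundancy (if $\theta\in\mathbb{R}^{1+d}$ with $\sum_{i=0}^d\theta^iS^i_t=0$ a.s. for $t\in\{0,1\}$ then $\theta=0$), $R^i\in L^1$, $\mathbb{E}[R^i]\ne r$ for some $i$. Excess return: $X_\pi:=\pi\cdot(R-r\mathbf{1})$. $L$ is a Riesz space with $L^\infty\subset L\subset L^1$ containing all $X_\pi$. $\mathcal{D}:=\{Z\in L^1:Z\ge0,\mathbb{E}[Z]=1\}$; $\mathcal{Q}\subset\mathcal{D}$ is convex with $1\in\mathcal{Q}$ and $\rho(X)=\sup_{Z\in\mathcal{Q}}\mathbb{E}[-ZX]$ on $L$, with $\mathbb{E}[-ZX]:=\mathbb{E}[ZX^-]-\mathbb{E}[ZX^+]$ and $\mathbb{E}[-ZX]=\infty$ if $\mathbb{E}[ZX^-]=\infty$. $\mathcal{M}:=\{Z\in\mathcal{D}:\mathbb{E}[Z(R^i-r)]=0\ \forall i\}$. Strong $\rho$-arbitrage: for every $\pi$ there is $\pi'$ with $\mathbb{E}[X_{\pi'}]>\mathbb{E}[X_\pi]$ and $\rho(X_{\pi'})<\rho(X_\pi)$.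 *)

(* Defs.v *)
From HB Require Import structures.
From mathcomp Require Import all_boot all_order all_algebra.
From mathcomp Require Import all_classical all_reals all_analysis.
Set Implicit Arguments. Unset Strict Implicit. Unset Printing Implicit Defensive.
Import Order.TTheory GRing.Theory Num.Theory.
Local Open Scope classical_set_scope.
Local Open Scope ring_scope.

Section Market.
Context {dT : measure_display} {T : measurableType dT} {R : realType}.
Variable P : probability T R.
Variable n : nat. (* number d of risky assets *)

Definition ret (S0 : 'I_n -> R) (S1 : 'I_n -> T -> R) (i : 'I_n) : T -> R :=
  fun w => (S1 i w - S0 i) / S0 i.

Definition Xpi (S0 : 'I_n -> R) (S1 : 'I_n -> T -> R) (r : R) (pi : 'I_n -> R)
  : T -> R := fun w => \sum_(i < n) pi i * (ret S0 S1 i w - r).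

Definition nonredundant (S0 : 'I_n -> R) (S1 : 'I_n -> T -> R) (r : R) : Prop :=
  forall (th0 : R) (th : 'I_n -> R),
    th0 * 1 + \sum_(i < n) th i * S0 i = 0 ->
    {ae P, forall w, th0 * (1 + r) + \sum_(i < n) th i * S1 i w = 0} ->
    th0 = 0 /\ (forall i, th i = 0).

Definition Ex (X : T -> R) : \bar R := (\int[P]_w (X w)%:E)%E.

Definition densities : set (T -> R) :=
  [set Z : T -> R | [/\ measurable_fun setT Z, (forall w, 0 <= Z w),
               P.-integrable setT (EFin \o Z) & Ex Z = 1%E]].

(* E[-Z X] := E[Z X^-] - E[Z X^+], and +oo if E[Z X^-] = +oo *)
Definition EnegZX (Z X : T -> R) : \bar R :=
  let a := (\int[P]_w (Z w * Num.max (- X w) 0)%:E)%E in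
  if a == +oo%E then +oo%E
  else (a - \int[P]_w (Z w * Num.max (X w) 0)%:E)%E.

Definition rho (Q : set (T -> R)) (X : T -> R) : \bar R :=
  ereal_sup [set EnegZX Z X | Z in Q].

Definition mart_densities (S0 : 'I_n -> R) (S1 : 'I_n -> T -> R) (r : R)
  : set (T -> R) :=
  [set Z : T -> R | densities Z /\
     forall i : 'I_n,
       P.-integrable setT (EFin \o (fun w => Z w * (ret S0 S1 i w - r))) /\
       Ex (fun w => Z w * (ret S0 S1 i w - r)) = 0%E].

Definition riesz_space (L : set (T -> R)) : Prop :=
  [/\ L (fun _ => 0),
      (forall f g, L f -> L g -> L (fun w => f w + g w)),
      (forall (a : R) f, L f -> L (fun w => a * f w)) &
      (forall f, L f -> L (fun w => Num.max (f w) 0))].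

Definition Linf_sub (L : set (T -> R)) : Prop :=
  forall f : T -> R, measurable_fun setT f ->
    (exists M : R, {ae P, forall w, `|f w| <= M}) -> L f.

Definition sub_L1 (L : set (T -> R)) : Prop :=
  forall f, L f -> P.-integrable setT (EFin \o f).

Definition strong_rho_arbitrage (Q : set (T -> R)) (S0 : 'I_n -> R)
  (S1 : 'I_n -> T -> R) (r : R) : Prop :=
  forall pi : 'I_n -> R, exists pi' : 'I_n -> R,
    (Ex (Xpi S0 S1 r pi) < Ex (Xpi S0 S1 r pi'))%E /\
    (rho Q (Xpi S0 S1 r pi') < rho Q (Xpi S0 S1 r pi))%E.

End Market.

(* Main.v *)
Require Import Defs.
From HB Require Import structures.
From mathcomp Require Import all_boot all_order all_algebra.
From mathcomp Require Import all_classical all_reals all_analysis.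
Import Order.TTheory GRing.Theory Num.Theory.
Local Open Scope classical_set_scope.
Local Open Scope ring_scope.

Lemma mart_Eneg_ge0 (dT : measure_display) (T : measurableType dT)
  (R : realType) (P : probability T R) (n : nat)
  (r : R) (S0 : 'I_n -> R) (S1 : 'I_n -> T -> R) (Z : T -> R)
  (pi : 'I_n -> R) :
  mart_densities P S0 S1 r Z -> (0 <= EnegZX P Z (Xpi S0 S1 r pi))%E.
Proof.
move=> [[mZ Z0 iZ EZ] Zm].
pose g i := fun w => Z w * (ret S0 S1 i w - r).
pose f := fun w => Z w * Xpi S0 S1 r pi w.
have fE : (EFin \o f) = (fun w => \sum_(i < n) (pi i)%:E * (g i w)%:E)%E.
  apply: funext => w /=; rewrite sumEFin /f /Xpi mulr_sumr; congr (_%:E).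
  by apply: eq_bigr => i _; rewrite /g mulrCA.
have fi : P.-integrable setT (EFin \o f).
  rewrite fE; apply: (integrable_sum measurableT) => i _.
  by apply: (integrableZl measurableT); case: (Zm i).
have fint : (\int[P]_w (EFin \o f) w = 0)%E.
  rewrite fE (integral_sum measurableT); last first.
    by move=> i; apply: (integrableZl measurableT); case: (Zm i).
  apply: big1 => i _; rewrite (integralZl measurableT); last by case: (Zm i).
  by case: (Zm i) => _; rewrite /Ex /g => ->; rewrite mule0.
have eA : (\int[P]_w (Z w * Num.max (- Xpi S0 S1 r pi w) 0)%:E
          = \int[P]_w (EFin \o f)^\- w)%E.
  apply: eq_integral => w _; rewrite funenegE /= -EFin_max; congr (_%:E).
  by rewrite maxr_pMr // mulr0 /f mulrN.
have eB : (\int[P]_w (Z w * Num.max (Xpi S0 S1 r pi w) 0)%:E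
          = \int[P]_w (EFin \o f)^\+ w)%E.
  apply: eq_integral => w _; rewrite funeposE /= -EFin_max; congr (_%:E).
  by rewrite maxr_pMr // mulr0.
have afin := integrable_neg_fin_num (measurableT) fi.
have bfin := integrable_pos_fin_num (measurableT) fi.
move: fint; rewrite integralE.
rewrite /EnegZX /= eA eB.
rewrite -(fineK afin) -(fineK bfin).
set a := fine _; set b := fine _.
move=> /= h; move: h; rewrite -!EFinD lee_fin => -[h].
have -> : b + - a = - (a + - b) by rewrite opprD opprK addrC.
by rewrite h oppr0.
Qed.

Theorem proposition4p14 (dT : measure_display) (T : measurableType dT)
  (R : realType) (P : probability T R) (n : nat)
  (r : R) (S0 : 'I_n -> R) (S1 : 'I_n -> T -> R)
  (L : set (T -> R)) (Q : set (T -> R)) :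
  -1 < r ->
  (forall i, 0 < S0 i) ->
  (forall i, measurable_fun setT (S1 i)) ->
  nonredundant P S0 S1 r ->
  (forall i, P.-integrable setT (EFin \o ret S0 S1 i)) ->
  (exists i, Ex P (ret S0 S1 i) <> r%:E) ->
  riesz_space L -> Linf_sub P L -> sub_L1 P L ->
  (forall pi : 'I_n -> R, L (Xpi S0 S1 r pi)) ->
  Q `<=` densities P ->
  (forall Z1 Z2 (t : R), Q Z1 -> Q Z2 -> 0 <= t -> t <= 1 ->
     Q (fun w => t * Z1 w + (1 - t) * Z2 w)) ->
  Q (fun _ => 1) ->
  Q `&` mart_densities P S0 S1 r !=set0 ->
  ~ strong_rho_arbitrage P Q S0 S1 r.
Proof.
move=> _ _ _ _ _ _ _ _ _ _ _ _ _ [Z [QZ MZ]] /(_ (fun _ => 0)) [pi' [_ Hrho]].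
have H0 : (rho P Q (Xpi S0 S1 r (fun _ => 0%R)) <= 0%E)%E.
  apply: ge_ereal_sup => _ [Z' _ <-].
  have X0 : Xpi S0 S1 r (fun _ => 0%R) = fun _ => 0%R.
    by apply: funext => w; rewrite /Xpi big1 // => i _; rewrite mul0r.
  rewrite X0 /EnegZX.
  have -> : (\int[P]_w (Z' w * Num.max (- (0:R)) 0)%:E = 0)%E.
    rewrite -(integral0 P setT); apply: eq_integral => w _.
    by rewrite oppr0 maxxx mulr0.
  have -> : (\int[P]_w (Z' w * Num.max (0:R) 0)%:E = 0)%E.
    rewrite -(integral0 P setT); apply: eq_integral => w _.
    by rewrite maxxx mulr0.
  by rewrite /= sube0.
have H1 : (EnegZX P Z (Xpi S0 S1 r pi') <= rho P Q (Xpi S0 S1 r pi'))%E.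
  by apply: ereal_sup_ubound; exists Z.
have H2 := @mart_Eneg_ge0 _ _ _ P n r S0 S1 Z pi' MZ.
have := lt_le_trans (le_lt_trans (le_trans H2 H1) Hrho) H0.
by rewrite ltxx.
Qed.
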